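(* Let $D$ be a division ring, $A$ a finitely generated free abelian group, $D * A$ a crossed product, and $M$ a nonzero finitely generated $D * A$-module with $\mathrm{gk}(M)\ge 1$. Let $C<A$ be an infinite cyclic subgroup such that $M$ is $D * C$-torsion, and let $V$ be a carrier space of $\Delta^*(M)$. Then $V^\circ\cap C\neq\langle 1\rangle$.
   Context: A crossed product $D * A$ has $D$-basis $\{\bar a: a\in A\}$ with $\bar a_1\bar a_2=\tau(a_1,a_2)\overline{a_1a_2}$ ($\tau(a_1,a_2)\in D\setminus\{0\}$) and $\bar a d=\sigma_a(d)\bar a$ for automorphisms $\sigma_a$ of $D$. For $X\subseteq A$, $D * X$ is the set of elements whose support lies in $X$. $M$ is $D * C$-torsion if every element is annihilated by a nonzero element of $D * C$; $\mathrm{gk}$ is Gelfand–Kirillov dimension over $D$. Let $A^*=\mathrm{Hom}_{\mathbb Z}(A,\mathbb R)\cong\mathbb R^{\mathrm{rk}(A)}$. For $\phi\in A^*$ put $A(0,\phi)=\{a:\phi(a)\ge0\}$, $A(+,\phi)=\{a:\phi(a)>0\}$. For a finite generating set $\mathcal X$ of $M$, the trailing coefficient module is $TC_\phi(M)=\mathcal X(D * A(0,\phi))/\mathcal X(D * A(+,\phi))$, and $\Delta(M)=\{\phi\in A^*: TC_\phi(M)\neq0\}$ (independent of $\mathcal X$). A point $x$ of a subset $S\subseteq\mathbb R^n$ is regular if some neighborhood of $x$ in $S$ (intersection of $S$ with a ball centred at $x$) is an $m$-ball (intersection of a ball with an $m$-dimensional subspace) and no point of $S$ has this property for a larger $m$.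 $\Delta^*(M)$ is the Euclidean closure of the set of regular points of $\Delta(M)$; it is a closed rational polyhedron of dimension $\mathrm{gk}(M)$, and its carrier spaces are the linear spans of neighborhoods of its regular points. For a subspace $V\subseteq A^*$, $V^\circ=\{a\in A:\phi(a)=0\ \forall\phi\in V\}$. *)

(* Defs.v *)
From HB Require Import structures.
From mathcomp Require Import all_boot all_order all_algebra.
From mathcomp Require Import all_classical all_reals all_analysis.
Set Implicit Arguments. Unset Strict Implicit. Unset Printing Implicit Defensive.
Import Order.TTheory GRing.Theory Num.Theory.
Local Open Scope ring_scope.
Local Open Scope classical_set_scope.

(* The free abelian group A of rank n is 'rV[int]_n (written additively). *)
Notation grpA n := 'rV[int]_n.

Definition division_ring (D : unitRingType) : Prop :=
  forall x : D, x != 0 -> x \is a GRing.unit.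

Definition ring_automorphism (D : unitRingType) (f : D -> D) : Prop :=
  [/\ f 1 = 1, forall x y, f (x + y) = f x + f y,
      forall x y, f (x * y) = f x * f y & bijective f].

(* Crossed product data of D * A: ubar a ubar b = tau a b ubar (a+b) and
   ubar a d = sigma a d ubar a; the two last conditions are associativity
   of the crossed product. *)
Definition crossed_product_data (D : unitRingType) (n : nat)
  (sigma : grpA n -> D -> D) (tau : grpA n -> grpA n -> D) : Prop :=
  [/\ forall a, ring_automorphism (sigma a),
      forall a b, tau a b != 0,
      (* (ubar a ubar b) d = ubar a (ubar b d) *)
      forall a b d, tau a b * sigma (a + b) d = sigma a (sigma b d) * tau a b &
      (* (ubar a ubar b) ubar c = ubar a (ubar b ubar c) *)
      forall a b c, tau a b * tau (a + b) c = sigma a (tau b c) * tau a (b + c)].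

(* A (left, unital) D * A-module structure on the left D-module M is given by
   the actions g a : M -> M of the basis elements ubar a.  The identity of
   D * A is (tau 0 0)^-1 ubar 0. An element sum_a d_a ubar a acts by
   m |-> sum_a d_a *: g a m. *)
Definition crossed_module (D : unitRingType) (n : nat)
  (sigma : grpA n -> D -> D) (tau : grpA n -> grpA n -> D)
  (M : lmodType D) (g : grpA n -> M -> M) : Prop :=
  [/\ forall a x y, g a (x + y) = g a x + g a y,
      forall a d x, g a (d *: x) = sigma a d *: g a x,
      forall a b x, g a (g b x) = tau a b *: g (a + b) x &
      forall x, (tau 0 0)^-1 *: g 0 x = x].

Section Defs.
Variables (D : unitRingType) (n : nat) (M : lmodType D) (g : grpA n -> M -> M).

(* X (D * S) for a finite set X of elements of M and a subset S of A:
   the set of sums  sum_i d_i *: g a_i x_i  with a_i in S and x_i in X. *)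
Definition sub_span (X : seq M) (S : set (grpA n)) : set M :=
  [set m | exists s : seq (D * grpA n * M),
      (forall t, t \in s -> S t.1.2 /\ t.2 \in X) /\
      m = \sum_(t <- s) t.1.1 *: g t.1.2 t.2].

Definition fin_generates (X : seq M) : Prop := forall m, sub_span X setT m.

Definition finitely_generated : Prop := exists X, fin_generates X.

(* M is D * C-torsion: every element is annihilated by a nonzero element
   sum_(c in C) d_c ubar c of D * C (distinct support, some d_c nonzero). *)
Definition torsion_over (C : set (grpA n)) : Prop :=
  forall m : M, exists s : seq (grpA n * D),
    [/\ uniq (map fst s), (forall t, t \in s -> C t.1),
        has (fun t => t.2 != 0) s &
        \sum_(t <- s) t.2 *: g t.1 m = 0].

Definition D_free (s : seq M) : Prop :=
  forall c : seq D, size c = size s ->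
    \sum_(i < size s) c`_i *: s`_i = 0 -> forall i, c`_i = 0.

Variable R : realType.

Definition dimD (P : set M) : \bar R :=
  ereal_sup [set ((size s)%:R)%:E | s in [set s : seq M |
                 (forall x, x \in s -> P x) /\ D_free s]].

Definition sumset (F : seq (grpA n)) (k : nat) : set (grpA n) :=
  [set a | exists s : seq (grpA n),
     size s = k /\ (forall b, b \in s -> b \in 0 :: F) /\ a = \sum_(b <- s) b].

(* Gelfand-Kirillov dimension over D: sup over finite subsets X of M and
   finite-dimensional D-subspaces V = D-span{ubar a : a in 0::F} of D * A of
   limsup_k log dim_D (X V^k) / log k  (note X V^k = X (D * sumset F k)). *)
Definition gk : \bar R :=
  ereal_sup [set l | exists (X : seq M) (F : seq (grpA n)),
     l = limn_esup (fun k : nat =>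
       ((ln (fine (dimD (sub_span X (sumset F k)))) / ln (k%:R)) : R)%:E)].

(* A^* = Hom(A, R), identified with R^n = 'rV[R]_n via the standard basis *)
Definition evalA (phi : 'rV[R]_n) (a : grpA n) : R :=
  \sum_(i < n) phi 0 i * (a 0 i)%:~R.

Definition A0 (phi : 'rV[R]_n) : set (grpA n) := [set a | 0 <= evalA phi a].
Definition Aplus (phi : 'rV[R]_n) : set (grpA n) := [set a | 0 < evalA phi a].

(* Delta(M) w.r.t. the finite generating set X:  TC_phi(M) <> 0, i.e.
   X (D * A(0,phi)) is not contained in X (D * A(+,phi)). *)
Definition Delta (X : seq M) : set 'rV[R]_n :=
  [set phi | exists m, sub_span X (A0 phi) m /\ ~ sub_span X (Aplus phi) m].
End Defs.

Section Geometry.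
Variables (R : realType) (n : nat).
Implicit Types (S : set 'rV[R]_n) (x y : 'rV[R]_n).

Definition sqdist x y : R := \sum_(i < n) (x 0 i - y 0 i) ^+ 2.

Definition mball_with S x (e : R) (m : nat) : Prop :=
  exists U : 'M[R]_n, (\rank U = m)%N /\
    (forall y, sqdist y x < e ^+ 2 -> (S y <-> (y <= U)%MS)).

Definition mball_at S x (m : nat) : Prop :=
  exists2 e : R, 0 < e & mball_with S x e m.

Definition maximal_dim S (m : nat) : Prop :=
  forall y m', S y -> mball_at S y m' -> (m' <= m)%N.

Definition regular S x : Prop :=
  S x /\ exists m, mball_at S x m /\ maximal_dim S m.

Definition eclosure S : set 'rV[R]_n :=
  [set x | forall e : R, 0 < e -> exists y, S y /\ sqdist y x < e ^+ 2].

Definition is_span (P : set 'rV[R]_n) (V : 'M[R]_n) : Prop :=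
  (forall y, P y -> (y <= V)%MS) /\
  (forall W : 'M[R]_n, (forall y, P y -> (y <= W)%MS) -> (V <= W)%MS).

Definition carrier_space S (V : 'M[R]_n) : Prop :=
  exists x (e : R) (m : nat),
    [/\ S x, 0 < e, mball_with S x e m, maximal_dim S m &
        is_span [set y | S y /\ sqdist y x < e ^+ 2] V].
End Geometry.

Definition Delta_star (D : unitRingType) (n : nat) (M : lmodType D)
  (g : grpA n -> M -> M) (R : realType) (X : seq M) : set 'rV[R]_n :=
  eclosure (regular (@Delta D n M g R X)).

Definition cyclic_sub (n : nat) (c0 : grpA n) : set (grpA n) :=
  [set a | exists k : int, a = c0 *~ k].

(* Main.v *)
Require Import Defs.
From HB Require Import structures.
From mathcomp Require Import all_boot all_order all_algebra.
From mathcomp Require Import all_classical all_reals all_analysis.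
From mathcomp Require Import lra.
Set Implicit Arguments. Unset Strict Implicit.
Import Order.TTheory GRing.Theory Num.Theory.
Local Open Scope ring_scope.
Local Open Scope classical_set_scope.

Lemma evalAD (R : realType) n (phi : 'rV[R]_n) a b :
  evalA phi (a + b) = evalA phi a + evalA phi b.
Proof. by rewrite /evalA -big_split; apply: eq_bigr => i _; rewrite mxE intrD mulrDr. Qed.

Lemma evalAN (R : realType) n (phi : 'rV[R]_n) a :
  evalA phi (- a) = - evalA phi a.
Proof. by rewrite /evalA -sumrN; apply: eq_bigr => i _; rewrite mxE intrN mulrN. Qed.

Lemma evalA0 (R : realType) n (phi : 'rV[R]_n) : evalA phi 0 = 0.
Proof. by rewrite /evalA big1 // => i _; rewrite mxE mulr0. Qed.

Lemma evalAMn (R : realType) n (phi : 'rV[R]_n) c (m : nat) :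
  evalA phi (c *+ m) = m%:R * evalA phi c.
Proof.
elim: m => [|m IH]; first by rewrite mulr0n evalA0 mul0r.
by rewrite mulrS evalAD IH mulrSr mulrDl mul1r addrC.
Qed.

Lemma evalAMz (R : realType) n (phi : 'rV[R]_n) c (k : int) :
  evalA phi (c *~ k) = k%:~R * evalA phi c.
Proof.
case: k => m; first by rewrite -pmulrn evalAMn.
by rewrite NegzE mulrNz evalAN -pmulrn evalAMn intrN mulNr.
Qed.

Lemma uniq_map_eq (T1 T2 : eqType) (f : T1 -> T2) s x y :
  uniq (map f s) -> x \in s -> y \in s -> f x = f y -> x = y.
Proof.
elim: s => //= z s IH /andP[zn us]; rewrite !inE.
case/orP=> [/eqP->|xs]; case/orP=> [/eqP->|ys] // fe.
- by move: zn; rewrite fe (map_f f ys).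
- by move: zn; rewrite -fe (map_f f xs).
- exact: IH.
Qed.

Lemma seq_min (T : eqType) (R : realType) (f : T -> R) s :
  s != [::] -> exists2 t, t \in s & forall u, u \in s -> f t <= f u.
Proof.
elim: s => // z s IH _.
have [->|sn] := eqVneq s [::].
  by exists z; rewrite ?inE ?eqxx // => u; rewrite inE => /eqP->.
have [t ts ht] := IH sn.
have [le|lt] := leP (f z) (f t).
  exists z; first by rewrite inE eqxx.
  move=> u; rewrite inE => /orP[/eqP->//|us]; exact: le_trans le (ht u us).
exists t; first by rewrite inE ts orbT.
move=> u; rewrite inE => /orP[/eqP->|us]; [exact: ltW | exact: ht].
Qed.

Lemma g0 (D : unitRingType) n sigma tau (M : lmodType D) (g : grpA n -> M -> M) a :
  crossed_module sigma tau g -> g a 0 = 0.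
Proof.
case=> gD _ _ _; have h := gD a 0 0; rewrite addr0 in h.
by apply: (@addrI _ (g a 0)); rewrite addr0 -h.
Qed.

Lemma g_sum (D : unitRingType) n sigma tau (M : lmodType D) (g : grpA n -> M -> M)
  (I : Type) (L : seq I) (c : I -> D) (b : I -> grpA n) a x :
  crossed_module sigma tau g ->
  g a (\sum_(u <- L) c u *: g (b u) x) =
  \sum_(u <- L) (sigma a (c u) * tau a (b u)) *: g (a + b u) x.
Proof.
move=> Hg; have [gD gZ gg _] := Hg.
elim: L => [|u L IH]; first by rewrite !big_nil (g0 a Hg).
by rewrite !big_cons gD gZ gg scalerA IH.
Qed.

Lemma sigma_neq0 (D : unitRingType) (f : D -> D) d :
  ring_automorphism f -> d != 0 -> f d != 0.
Proof.
case=> _ fD _ [h hK _] dn; apply: contra dn => /eqP fd0.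
have f0 : f 0 = 0.
  have h0 := fD 0 0; rewrite addr0 in h0.
  by apply: (@addrI _ (f 0)); rewrite addr0 -h0.
by apply/eqP; rewrite -(hK d) fd0 -{1}f0 hK.
Qed.

Lemma tors_step (D : unitRingType) n sigma tau (M : lmodType D)
  (g : grpA n -> M -> M) (R : realType) (phi : 'rV[R]_n) c0 :
  division_ring D -> crossed_product_data sigma tau -> crossed_module sigma tau g ->
  evalA phi c0 != 0 -> torsion_over g (cyclic_sub c0) ->
  forall x : M, exists L : seq (D * grpA n),
    (forall u, u \in L -> 0 < evalA phi u.2) /\
    x = \sum_(u <- L) u.1 *: g u.2 x.
Proof.
move=> divD [Haut Htau _ _] Hg v0 tors x.
have [gD gZ gg g1] := Hg.
have [s [us sC hs s0]] := tors x.
set s' := [seq t <- s | t.2 != 0].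
have s'0 : \sum_(t <- s') t.2 *: g t.1 x = 0.
  move: s0; rewrite (bigop.bigID (fun t => t.2 != 0)) /= [X in _ + X]big1 ?addr0 ?big_filter //.
  by move=> t /negbNE/eqP->; exact: scale0r.
have s'n : s' != [::].
  case/hasP: hs => t ts tn; apply/eqP => e.
  have : t \in s' by rewrite mem_filter tn ts.
  by rewrite e.
have [[a0 d0] t0s hmin] := seq_min (fun t : grpA n * D => evalA phi t.1) s'n.
have d0n : d0 != 0 by move: t0s; rewrite mem_filter => /andP[].
have us' : uniq (map fst s') := subseq_uniq (map_subseq _ (filter_subseq _ _)) us.
have := s'0; rewrite (perm_big _ (perm_to_rem t0s)) big_cons /= => e0.
have g0x : g 0 x = tau 0 0 *: x.
  by rewrite -{2}(g1 x) scalerA mulrV ?scale1r // (divD _ (Htau 0 0)).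
have := congr1 (g (- a0)) e0; rewrite (g0 _ Hg) gD gZ gg addNr (g_sum _ _ _ _ _ Hg) g0x !scalerA.
set c := sigma (-a0) d0 * tau (-a0) a0 * tau 0 0 => e1.
have cu : c \is a GRing.unit.
  rewrite /c unitrMl ?(divD _ (Htau _ _)) // unitrMl ?(divD _ (Htau _ _)) //.
  exact: (divD _ (sigma_neq0 (Haut _) d0n)).
exists [seq ((- c^-1 * (sigma (-a0) t.2 * tau (-a0) t.1)), -a0 + t.1) | t <- rem (a0,d0) s'].
split.
  move=> u /mapP[t tr ->] /=.
  rewrite (mem_rem_uniq _ (map_uniq us')) inE in tr; case/andP: tr => tne ts'.
  have ts : t \in s by move: ts'; rewrite mem_filter => /andP[].
  have t0ss : (a0, d0) \in s by move: t0s; rewrite mem_filter => /andP[].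
  have t1ne : t.1 != a0.
    apply: contra tne => /eqP e; apply/eqP; exact: (uniq_map_eq us' ts' t0s e).
  have [k ek] := sC t ts; have [k0 ek0] := sC _ t0ss; simpl in ek0.
  have hm := hmin t ts'; simpl in hm.
  rewrite evalAD evalAN addrC lt_neqAle subr_ge0 hm andbT.
  rewrite eq_sym subr_eq0; apply: contra t1ne.
  rewrite ek ek0 !evalAMz => /eqP e.
  have : (k%:~R - k0%:~R) * evalA phi c0 = 0 :> R by rewrite mulrBl e subrr.
  move/eqP; rewrite mulf_eq0 (negbTE v0) orbF -intrB intr_eq0 subr_eq0 => /eqP->.
  by [].
have cx : c *: x = - \sum_(i <- rem (a0, d0) s') (sigma (- a0) i.2 * tau (- a0) i.1) *: g (- a0 + i.1) x.
  by apply/eqP; rewrite -addr_eq0 e1.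
rewrite big_map -{1}(scale1r x) -(mulVr cu) -scalerA cx scalerN -scaleNr scaler_sumr.
by apply: eq_bigr => t _; rewrite scalerA.
Qed.

Lemma span0 (D : unitRingType) n (M : lmodType D) (g : grpA n -> M -> M) X S :
  Defs.sub_span g X S 0.
Proof. by exists [::]; split => //; rewrite big_nil. Qed.

Lemma spanD (D : unitRingType) n (M : lmodType D) (g : grpA n -> M -> M) X S m1 m2 :
  Defs.sub_span g X S m1 -> Defs.sub_span g X S m2 -> Defs.sub_span g X S (m1 + m2).
Proof.
move=> [s1 [h1 ->]] [s2 [h2 ->]]; exists (s1 ++ s2); split; last by rewrite big_cat.
by move=> t; rewrite mem_cat => /orP[/h1|/h2].
Qed.

Lemma spanZ (D : unitRingType) n (M : lmodType D) (g : grpA n -> M -> M) X S m d :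
  Defs.sub_span g X S m -> Defs.sub_span g X S (d *: m).
Proof.
move=> [s [h ->]]; exists [seq ((d * t.1.1, t.1.2), t.2) | t <- s]; split.
  by move=> t /mapP[u us ->] /=; apply: h.
by rewrite big_map scaler_sumr; apply: eq_bigr => t _; rewrite scalerA.
Qed.

Lemma Delta_sub (D : unitRingType) n sigma tau (M : lmodType D)
  (g : grpA n -> M -> M) (R : realType) (X : seq M) c0 (phi : 'rV[R]_n) :
  division_ring D -> crossed_product_data sigma tau -> crossed_module sigma tau g ->
  torsion_over g (cyclic_sub c0) -> Delta g X phi -> evalA phi c0 = 0.
Proof.
move=> divD Hcp Hg tors [m [H nsp]]; case: H => s [hs em]; subst m.
apply/eqP; apply: contraT => v0; case: nsp.
elim: s hs => [|t s IH] hs; first by rewrite big_nil; exact: span0.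
rewrite big_cons; apply: spanD; last by apply: IH => u us; apply: hs; rewrite inE us orbT.
apply: spanZ.
have [ta tx] := hs t (mem_head _ _).
have [L [hL ex]] := tors_step divD Hcp Hg v0 tors t.2.
have -> : g t.1.2 t.2 = g t.1.2 (\sum_(u <- L) u.1 *: g u.2 t.2) by rewrite -ex.
rewrite (g_sum _ _ _ _ _ Hg).
exists [seq ((sigma t.1.2 u.1 * tau t.1.2 u.2, t.1.2 + u.2), t.2) | u <- L]; split.
  move=> w /mapP[u uL ->] /=; split => //.
  rewrite /Aplus /= evalAD; have := hL u uL; move: ta; rewrite /A0 /=; lra.
by rewrite big_map.
Qed.

Lemma closure_H (R : realType) n (c0 : grpA n) (P : set 'rV[R]_n) y :
  (forall z, P z -> evalA z c0 = 0) ->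
  (forall e : R, 0 < e -> exists z, P z /\ sqdist z y < e ^+ 2) ->
  evalA y c0 = 0.
Proof.
move=> HP Hcl; apply/eqP; apply: contraT => wn.
set w := evalA y c0 in wn.
set K := \sum_(i < n) `|((c0 0 i)%:~R : R)|.
have K0 : 0 <= K by apply: sumr_ge0 => i _.
have wp : 0 < `|w| by rewrite normr_gt0.
set e := `|w| / (K + 1).
have ep : 0 < e by rewrite /e divr_gt0 // ltr_wpDl.
have [z [Pz zy]] := Hcl e ep.
have di : forall i, `|z 0 i - y 0 i| < e.
  move=> i; have : (z 0 i - y 0 i) ^+ 2 < e ^+ 2.
    apply: le_lt_trans zy; rewrite /sqdist (bigD1 i) //= lerDl.
    by apply: sumr_ge0 => j _; exact: sqr_ge0.
  set d := z 0 i - y 0 i => hd; rewrite ltr_norml; apply/andP; split; nra.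
have : `|evalA z c0 - w| <= e * K.
  rewrite /w /evalA -sumrB.
  have -> : \sum_(i < n) (z 0 i * (c0 0 i)%:~R - y 0 i * (c0 0 i)%:~R)
           = \sum_(i < n) (z 0 i - y 0 i) * (c0 0 i)%:~R.
    by apply: eq_bigr => i _; rewrite mulrBl.
  apply: le_trans (ler_norm_sum _ _ _) _; rewrite /K mulr_sumr; apply: ler_sum => i _.
  by rewrite normrM ler_wpM2r // ltW.
rewrite (HP _ Pz) sub0r normrN.
have : e * K < `|w|.
  rewrite /e mulrAC ltr_pdivrMr ?ltr_wpDl //; nra.
move=> h1 h2; have := le_lt_trans h2 h1; by rewrite ltxx.
Qed.

Unset Implicit Arguments. Set Strict Implicit.
Theorem lemma4p6 (D : unitRingType) (n : nat)
  (sigma : grpA n -> D -> D) (tau : grpA n -> grpA n -> D)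
  (M : lmodType D) (g : grpA n -> M -> M) (R : realType)
  (X : seq M) (c0 : grpA n) (V : 'M[R]_n) :
  division_ring D ->
  crossed_product_data sigma tau ->
  crossed_module sigma tau g ->
  (exists m : M, m != 0) ->
  fin_generates g X ->
  (1 <= gk g R)%E ->
  c0 != 0 ->
  torsion_over g (cyclic_sub c0) ->
  carrier_space (@Delta_star D n M g R X) V ->
  exists a : grpA n,
    [/\ cyclic_sub c0 a, a != 0 &
        forall phi : 'rV[R]_n, (phi <= V)%MS -> evalA phi a = 0].
Proof.
move=> divD Hcp Hg _ _ _ c0n tors [x [e [m [_ _ _ _ [_ Hspan]]]]].
set col := \col_(i < n) ((c0 0 i)%:~R : R).
have evE : forall phi : 'rV[R]_n, evalA phi c0 = (phi *m col) 0 0.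
  by move=> phi; rewrite mxE /evalA; apply: eq_bigr => i _; rewrite mxE.
have HS : forall y : 'rV[R]_n, Delta_star g X y -> evalA y c0 = 0.
  move=> y Hy; apply: (closure_H (P := regular (Delta g X))) Hy.
  by move=> z [Dz _]; exact: (Delta_sub divD Hcp Hg tors Dz).
have VW : (V <= kermx col)%MS.
  apply: Hspan => y [Hy _]; rewrite sub_kermx; apply/eqP/matrixP => i j.
  rewrite (ord1 i) (ord1 j) [RHS]mxE; apply: etrans (esym (evE y)) _; exact: HS.
exists c0; split => //; first by exists 1; rewrite mulr1z.
move=> phi phiV; rewrite evE.
have : (phi <= kermx col)%MS := submx_trans phiV VW.
by rewrite sub_kermx => /eqP->; rewrite mxE.
Qed.
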